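(* Let $d$ be a premetric on a topological space $X$. Then (1) the regularization $\overline d$ is a premetric with closed balls on $X$; (2) if $d$ has open balls, then the semiregularization $\overline d^\circ$ is a premetric with open balls on $X$.
   Context: A premetric on $X$ is $d:X\times X\to[0,\infty)$ with $d(x,x)=0$. $B_d(x,\varepsilon)=\{y:d(x,y)<\varepsilon\}$; $d$ has open balls if every $B_d(x,\varepsilon)$ is open, closed balls if every $\{y:d(x,y)\le\varepsilon\}$ is closed. The regularization is $\overline d(x,y)=\inf\{\varepsilon>0:y\in\overline{B_d(x,\varepsilon)}\}$ and the semiregularization is $\overline d^\circ(x,y)=\inf\{\varepsilon>0:y\in B_d(x,\varepsilon)\cup\mathrm{int}\,\overline{B_d(x,\varepsilon)}\}$. *)

(* Defs.v *)
From HB Require Import structures.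
From mathcomp Require Import all_boot all_order all_algebra.
From mathcomp Require Import all_classical all_reals topology.
Set Implicit Arguments. Unset Strict Implicit. Unset Printing Implicit Defensive.
Import Order.TTheory GRing.Theory Num.Theory.
Local Open Scope classical_set_scope.
Local Open Scope ring_scope.

Definition premetric (X : Type) (R : realType) (d : X -> X -> R) : Prop :=
  (forall x y, 0 <= d x y) /\ (forall x, d x x = 0).

Definition pball (X : Type) (R : realType) (d : X -> X -> R) (x : X) (e : R)
  : set X := [set y | d x y < e].

Definition has_open_balls (X : topologicalType) (R : realType)
  (d : X -> X -> R) : Prop :=
  forall (x : X) (e : R), open (pball d x e).

Definition has_closed_balls (X : topologicalType) (R : realType)
  (d : X -> X -> R) : Prop :=
  forall (x : X) (e : R), closed [set y | d x y <= e].

Definition regularization (X : topologicalType) (R : realType)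
  (d : X -> X -> R) (x y : X) : R :=
  inf [set e : R | 0 < e /\ closure (pball d x e) y].

Definition semiregularization (X : topologicalType) (R : realType)
  (d : X -> X -> R) (x y : X) : R :=
  inf [set e : R | 0 < e /\
        (pball d x e `|` interior (closure (pball d x e))) y].

(* Main.v *)
Require Import Defs.
From mathcomp Require Import all_boot all_order all_algebra.
From mathcomp Require Import all_classical all_reals topology.
From mathcomp Require Import unstable.
Import Order.TTheory GRing.Theory Num.Theory.
Local Open Scope classical_set_scope.
Local Open Scope ring_scope.


Section Aux.
Variable R : realType.
Variable P : R -> Prop.
Hypothesis mono : forall a b, a <= b -> P a -> P b.
Hypothesis ex : exists e, 0 < e /\ P e.

Let S := [set e : R | 0 < e /\ P e].

Lemma S_ne : S !=set0.
Proof using mono ex. by case: ex => e He; exists e. Qed.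

Lemma S_lb : has_lbound S.
Proof using mono ex. by exists 0 => e [] /ltW. Qed.

Lemma inf_ge0 : 0 <= inf S.
Proof using mono ex. by apply: lb_le_inf; [exact: S_ne | move=> e [] /ltW]. Qed.

Lemma inf_le e : 0 < e -> P e -> inf S <= e.
Proof using mono ex. by move=> e0 Pe; apply: (ge_inf S_lb). Qed.

Lemma inf_ltP e : inf S < e -> exists2 e', S e' & e' < e.
Proof using mono ex. exact: inf_lt S_ne. Qed.

Lemma inf_leP e : inf S <= e -> forall e', e < e' -> P e'.
Proof using mono ex.
move=> h e' ee'; have [e'' [_ Pe''] lt] : exists2 e'', S e'' & e'' < e'.
  by apply: inf_ltP; exact: le_lt_trans h ee'.
exact: mono (ltW lt) Pe''.
Qed.
End Aux.

Lemma pball_mono (X : Type) (R : realType) (d : X -> X -> R) x a b :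
  a <= b -> pball d x a `<=` pball d x b.
Proof. by move=> ab y; rewrite /pball /= => h; exact: lt_le_trans h ab. Qed.

Theorem proposition1p4 (X : topologicalType) (R : realType) (d : X -> X -> R) :
  premetric d ->
  (premetric (regularization d) /\ has_closed_balls (regularization d)) /\
  (has_open_balls d ->
     premetric (semiregularization d) /\
     has_open_balls (semiregularization d)).
Proof.
move=> [d0 dxx].
have monoR x y : forall a b, a <= b -> (fun e => closure (pball d x e) y) a ->
    (fun e => closure (pball d x e) y) b.
  by move=> a b ab; apply: closureS; exact: pball_mono.
have exR x y : exists e, 0 < e /\ closure (pball d x e) y.
  exists (d x y + 1); split; first by apply: ltr_wpDl.
  by apply: subset_closure; rewrite /pball /= ltrDl.
have monoS x y : forall a b, a <= b ->
   (fun e => (pball d x e `|` interior (closure (pball d x e))) y) a ->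
   (fun e => (pball d x e `|` interior (closure (pball d x e))) y) b.
  move=> a b ab [h|h]; [left; exact: pball_mono ab _ h|right].
  by apply: interiorS h; apply: closureS; exact: pball_mono.
have exS x y : exists e, 0 < e /\
    (pball d x e `|` interior (closure (pball d x e))) y.
  exists (d x y + 1); split; first by apply: ltr_wpDl.
  by left; rewrite /pball /= ltrDl.
split; [split; [split|] | move=> Hop; split; [split|]].
- by move=> x y; exact: (inf_ge0 _ _ (monoR x y) (exR x y)).
- move=> x; apply/eqP; rewrite eq_le (inf_ge0 _ _ (monoR x x) (exR x x)) andbT.
  apply/ler_gtP => e e0; apply: (inf_le _ _ (monoR x x) (exR x x) _ e0).
  by apply: subset_closure; rewrite /pball /= dxx.
- move=> x e; have [e0|e0] := ltP e 0.
    suff -> : [set y | regularization d x y <= e] = set0 by exact: closed0.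
    apply/seteqP; split => // y /= h.
    by have := le_trans (inf_ge0 _ _ (monoR x y) (exR x y)) h; rewrite leNgt e0.
  suff -> : [set y | regularization d x y <= e] =
      \bigcap_(e' in [set e' | e < e']) closure (pball d x e').
    by apply: closed_bigI => i _; exact: closed_closure.
  apply/seteqP; split => y /=.
    by move=> h e' ee'; exact: (inf_leP _ _ (monoR x y) (exR x y) _ h).
  move=> h; apply/ler_gtP => e' ee'.
  by apply: (inf_le _ _ (monoR x y) (exR x y)); [exact: le_lt_trans e0 ee'|exact: h].
- by move=> x y; exact: (inf_ge0 _ _ (monoS x y) (exS x y)).
- move=> x; apply/eqP; rewrite eq_le (inf_ge0 _ _ (monoS x x) (exS x x)) andbT.
  apply/ler_gtP => e e0; apply: (inf_le _ _ (monoS x x) (exS x x) _ e0).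
  by left; rewrite /pball /= dxx.
- move=> x e.
  suff -> : pball (semiregularization d) x e =
      \bigcup_(e' in [set e' | 0 < e' < e])
         (pball d x e' `|` interior (closure (pball d x e'))).
    apply: bigcup_open => i _; apply: openU; first exact: Hop.
    exact: open_interior.
  apply/seteqP; split => y; rewrite /pball /=.
    move=> h; have [e' [e'0 Pe'] e'e] := inf_ltP _ _ (monoS x y) (exS x y) _ h.
    by exists e' => //=; rewrite e'0 e'e.
  move=> [e' /= /andP[e'0 e'e] Pe'].
  exact: le_lt_trans (inf_le _ _ (monoS x y) (exS x y) _ e'0 Pe') e'e.
Qed.
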